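(* Let $G$ be a free abelian group, let $D$ be a subgroup of $G$, let $L\in{\mathrm{End}}_{\mathbb{Z}}(G)$ satisfy $L(D)\subseteq D$, and let $k$ be a positive integer such that the restriction of $L$ to $L^k(D)$ is a monomorphism $L^k(D)\to D$. Let $\overline{L}:G/D\to G/D$ be the induced endomorphism $g+D\mapsto L(g)+D$. Then for every finitely generated subgroup $X\subseteq G$, writing $\overline{X}:=(X+D)/D$, we have $$\eta_L(X)\leq \eta_{\overline{L}}(\overline{X})+k.$$
   Context: For an abelian group $M$, an endomorphism $f$ of $M$ and a finitely generated subgroup $Y\subseteq M$, $\eta_f(Y)$ denotes the least non-negative integer $k$ such that for every $m\geq k$ the restriction $f|_{f^m(Y)}:f^m(Y)\to f^{m+1}(Y)$ is an isomorphism (this integer exists by Fitting's Lemma over the noetherian ring $\mathbb{Z}$). *)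

(* Defs.v *)
From HB Require Import structures.
From mathcomp Require Import all_boot all_order all_algebra.
From Stdlib Require Import ClassicalEpsilon.
Set Implicit Arguments. Unset Strict Implicit. Unset Printing Implicit Defensive.
Import GRing.Theory.
Local Open Scope ring_scope.

Definition is_subgroup (M : zmodType) (S : M -> Prop) : Prop :=
  S 0 /\ (forall x y, S x -> S y -> S (x - y)).

Definition fingen_subgroup (M : zmodType) (S : M -> Prop) : Prop :=
  exists (n : nat) (g : 'I_n -> M),
    forall x, S x <-> exists c : 'I_n -> int, x = \sum_(j < n) g j *~ c j.

Definition free_abelian (M : zmodType) : Prop :=
  exists (I : Type) (b : I -> M),
    (forall x, exists (n : nat) (i : 'I_n -> I) (c : 'I_n -> int),
        x = \sum_(j < n) b (i j) *~ c j) /\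
    (forall (n : nat) (i : 'I_n -> I) (c : 'I_n -> int),
        injective i -> \sum_(j < n) b (i j) *~ c j = 0 -> forall j, c j = 0).

Definition img (M N : Type) (f : M -> N) (S : M -> Prop) : N -> Prop :=
  fun y => exists x, S x /\ y = f x.

Definition iter_img (M : Type) (f : M -> M) (m : nat) (S : M -> Prop) : M -> Prop :=
  img (iter m f) S.

Definition inj_on (M N : Type) (f : M -> N) (S : M -> Prop) : Prop :=
  forall x y, S x -> S y -> f x = f y -> x = y.

(* k works for eta: for every m >= k the restriction
   f|_{f^m(Y)} : f^m(Y) -> f^{m+1}(Y) is an isomorphism
   (it is onto f^{m+1}(Y) by definition, so this is injectivity). *)
Definition eta_ok (M : zmodType) (f : M -> M) (Y : M -> Prop) (k : nat) : Prop :=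
  forall m, (k <= m)%N -> inj_on f (iter_img f m Y).

Definition eta_okb (M : zmodType) (f : M -> M) (Y : M -> Prop) : pred nat :=
  fun k => if excluded_middle_informative (eta_ok f Y k) then true else false.

(* eta_f(Y): the least k with eta_ok f Y k (0 if none exists, which does not
   happen for finitely generated Y by Fitting's lemma). *)
Definition eta_index (M : zmodType) (f : M -> M) (Y : M -> Prop) : nat :=
  match excluded_middle_informative (exists k, eta_okb f Y k) with
  | left H => ex_minn H
  | right _ => 0%N
  end.

(* Main.v *)
Require Import Defs.
From HB Require Import structures.
From mathcomp Require Import all_boot all_order all_algebra.
From Stdlib Require Import Classical ClassicalEpsilon.
Set Implicit Arguments. Unset Strict Implicit.
Import GRing.Theory Num.Theory.
Local Open Scope ring_scope.

Lemma chain_mono (T : Type) (A : nat -> T -> Prop) :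
  (forall m x, A m x -> A m.+1 x) -> forall m m' x, (m <= m')%N -> A m x -> A m' x.
Proof.
move=> Hs m m' x /subnK <-; elim: (m' - m)%N => [|d IH] //= Ax.
by rewrite addSn; apply: Hs; apply: IH.
Qed.

Section Sub.
Variables (M : zmodType) (S : M -> Prop) (HS : is_subgroup S).
Lemma sub0 : S 0. Proof. by case: HS. Qed.
Lemma subB x y : S x -> S y -> S (x - y). Proof. by case: HS => _; apply. Qed.
Lemma subN x : S x -> S (- x).
Proof. by move=> Sx; rewrite -sub0r; apply: subB => //; apply: sub0. Qed.
Lemma subD x y : S x -> S y -> S (x + y).
Proof. by move=> Sx Sy; rewrite -[y]opprK; apply: subB => //; apply: subN. Qed.
Lemma subMn x n : S x -> S (x *+ n).
Proof. move=> Sx; elim: n => [|n IH]; first by rewrite mulr0n; apply: sub0. by rewrite mulrS; apply: subD. Qed.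
Lemma subMz x c : S x -> S (x *~ c).
Proof.
move=> Sx; case: c => n; first exact: subMn.
by rewrite NegzE mulrNz; apply/subN/subMn.
Qed.
Lemma subsum n (F : 'I_n -> M) : (forall j, S (F j)) -> S (\sum_(j < n) F j).
Proof. move=> HF; apply: (big_ind S) => //; [exact: sub0 | exact: subD]. Qed.
End Sub.

Definition span (M : zmodType) n (g : 'I_n -> M) (x : M) :=
  exists c : 'I_n -> int, x = \sum_(j < n) g j *~ c j.

Lemma span_sub (M : zmodType) n (g : 'I_n -> M) : is_subgroup (span g).
Proof.
split; first by exists (fun _ => 0); rewrite big1 // => j _; rewrite mulr0z.
move=> x y [c ->] [d ->]; exists (fun j => c j - d j).
rewrite -sumrB; apply: eq_bigr => j _; by rewrite mulrzBr.
Qed.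

Lemma acc_int (A : nat -> int -> Prop) :
  (forall m, is_subgroup (A m)) -> (forall m x, A m x -> A m.+1 x) ->
  exists N, forall m x, (N <= m)%N -> A m x -> A N x.
Proof.
move=> Hsub Hs.
pose Pv (v : nat) := exists m, (0 < v)%N /\ A m (Posz v).
pose Pb : pred nat := fun v => if excluded_middle_informative (Pv v) then true else false.
have PbP v : Pb v <-> Pv v.
  by rewrite /Pb; case: excluded_middle_informative.
case: (classic (exists v, Pb v)) => [ex|nex].
  case: (ex_minnP ex) => v0 /PbP [m1 [v0p Am1]] vmin.
  exists m1 => m x le Amx.
  have Amv0 : A m (Posz v0) by apply: (chain_mono Hs le).
  have xE := divz_eq x (Posz v0).
  set q := (x %/ v0)%Z in xE; set r := (x %% v0)%Z in xE.
  have v0nz : Posz v0 != 0 by rewrite eqz_nat -lt0n.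
  have r0 : r = 0.
    have Ar : A m r.
      have -> : r = x - q * Posz v0 by rewrite {1}xE addrC addKr.
      by apply: subB => //; rewrite mulrC -mulrzz; apply: subMz.
    have rge : 0 <= r by apply: modz_ge0.
    have rlt : r < Posz v0 by exact: (ltz_mod x v0nz).
    have [n rn] : exists n, r = Posz n by exists `|r|%N; rewrite gez0_abs.
    rewrite rn in Ar rlt *; case: n {rn} Ar rlt => // n An lt.
    have : (v0 <= n.+1)%N by apply: vmin; apply/PbP; exists m.
    by rewrite leqNgt -ltz_nat lt.
  rewrite xE r0 addr0 mulrC -mulrzz; apply: subMz => //.
exists 0%N => m x _ Amx.
have -> : x = 0.
  apply: NNPP => /eqP xn0; apply: nex; exists `|x|%N; apply/PbP; exists m.
  split; first by rewrite absz_gt0.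
  case: x xn0 Amx => n //= _ H.
  have -> : Posz n.+1 = - Negz n by rewrite NegzE opprK.
  exact: subN (Hsub m) _ H.
exact: sub0.
Qed.
Lemma acc_fg n : forall (M : zmodType) (g : 'I_n -> M) (A : nat -> M -> Prop),
  (forall m, is_subgroup (A m)) -> (forall m x, A m x -> A m.+1 x) ->
  (forall m x, A m x -> span g x) ->
  exists N, forall m x, (N <= m)%N -> A m x -> A N x.
Proof.
elim: n => [|n IH] M g A Hsub Hs Hsp.
  exists 0%N => m x _ /Hsp [c ->]; rewrite big_ord0; exact: sub0.
pose g' := fun j : 'I_n => g (widen_ord (leqnSn n) j).
pose l := g ord_max.
have spD x : span g x -> exists y c, span g' y /\ x = y + l *~ c.
  move=> [c ->]; rewrite big_ord_recr /=.
  by exists (\sum_(i < n) g' i *~ c (widen_ord (leqnSn n) i)), (c ord_max); split => //;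
    exists (fun i => c (widen_ord (leqnSn n) i)).
pose I m (c : int) := exists y, span g' y /\ A m (y + l *~ c).
pose B m y := A m y /\ span g' y.
have [N2 HN2] : exists N, forall m x, (N <= m)%N -> I m x -> I N x.
  apply: acc_int.
  - move=> m; split.
      exists 0; split; first exact: sub0 (span_sub g').
      rewrite mulr0z addr0; exact: sub0.
    move=> a b [y1 [s1 A1]] [y2 [s2 A2]]; exists (y1 - y2); split.
      exact: subB (span_sub g') _ _ s1 s2.
    have -> : y1 - y2 + l *~ (a - b) = (y1 + l *~ a) - (y2 + l *~ b).
      by rewrite mulrzBr opprD !addrA; congr (_ + _); rewrite addrAC.
    exact: subB.
  - by move=> m c [y [s Ay]]; exists y; split => //; apply: Hs.
have [N1 HN1] : exists N, forall m x, (N <= m)%N -> B m x -> B N x.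
  apply: (IH M g').
  - move=> m; split; first by split; [exact: sub0 | exact: sub0 (span_sub g')].
    move=> a b [Aa sa] [Ab sb]; split; [exact: subB | exact: subB (span_sub g') _ _ sa sb].
  - by move=> m x [Ax sx]; split => //; apply: Hs.
  - by move=> m x [].
exists (maxn N1 N2) => m x le Ax.
have le1 : (N1 <= m)%N by apply: leq_trans le; apply: leq_maxl.
have le2 : (N2 <= m)%N by apply: leq_trans le; apply: leq_maxr.
have [y [c [sy xE]]] := spD x (Hsp m x Ax).
have Ic : I m c by exists y; split => //; rewrite -xE.
have [y' [sy' Ay']] := HN2 m c le2 Ic.
have Ay'N : A (maxn N1 N2) (y' + l *~ c) by apply: (chain_mono Hs) Ay'; apply: leq_maxr.
have Ay'm : A m (y' + l *~ c) by apply: (chain_mono Hs) Ay'.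
have Byy : B m (y - y').
  split; last exact: subB (span_sub g') _ _ sy sy'.
  have -> : y - y' = x - (y' + l *~ c) by rewrite xE opprD addrACA subrr addr0.
  exact: subB.
have [AN1 _] := HN1 m _ le1 Byy.
have AN : A (maxn N1 N2) (y - y') by apply: (chain_mono Hs) AN1; apply: leq_maxl.
have -> : x = (y - y') + (y' + l *~ c) by rewrite addrA addrNK.
exact: subD.
Qed.

Section Iter.
Variables (M : zmodType) (f : M -> M) (fB : forall x y, f (x - y) = f x - f y).
Lemma itB m x y : iter m f (x - y) = iter m f x - iter m f y.
Proof. elim: m => [|m IH] //; by rewrite !iterS IH fB. Qed.
Lemma it0 m : iter m f 0 = 0.
Proof. by have := itB m 0 0; rewrite !subrr. Qed.
End Iter.

Lemma fg_span (M : zmodType) (Y : M -> Prop) :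
  fingen_subgroup Y -> exists n (g : 'I_n -> M), forall x, Y x <-> span g x.
Proof. by case=> n [g H]; exists n, g. Qed.

Lemma fg_sub (M : zmodType) (Y : M -> Prop) : fingen_subgroup Y -> is_subgroup Y.
Proof.
move=> /fg_span [n [g H]]; split; first by apply/H; exact: sub0 (span_sub g).
by move=> x y /H sx /H sy; apply/H; exact: subB (span_sub g) _ _ sx sy.
Qed.

Lemma fitting (M : zmodType) (f : M -> M) (Y : M -> Prop) :
  (forall x y, f (x - y) = f x - f y) -> fingen_subgroup Y -> exists N, eta_ok f Y N.
Proof.
move=> fB fgY; have SY := fg_sub fgY; have [n [g HY]] := fg_span fgY.
pose A m y := Y y /\ iter m f y = 0.
have [N HN] : exists N, forall m x, (N <= m)%N -> A m x -> A N x.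
  apply: (acc_fg (g := g)).
  - move=> m; split; first by split; [exact: sub0 | exact: it0].
    move=> a b [Ya ia] [Yb ib]; split; first exact: subB.
    by rewrite itB // ia ib subrr.
  - move=> m x [Yx ix]; split => //; by rewrite iterS ix; have := fB 0 0; rewrite !subrr.
  - by move=> m x [/HY].
exists N => m le _ _ [y1 [Y1 ->]] [y2 [Y2 ->]] e.
have Am : A m.+1 (y1 - y2).
  split; first exact: subB.
  by rewrite itB // !iterS e subrr.
have [_ AN] := HN _ _ (leqW le) Am.
have [_ Am'] : A m (y1 - y2).
  split; first exact: subB.
  have -> : m = (m - N + N)%N by rewrite subnK.
  by rewrite iterD AN it0.
by apply/eqP; rewrite -subr_eq0 -(itB fB) Am'.
Qed.

Lemma eta_index_spec (M : zmodType) (f : M -> M) (Y : M -> Prop) :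
  (exists N, eta_ok f Y N) ->
  eta_ok f Y (eta_index f Y) /\ forall N, eta_ok f Y N -> (eta_index f Y <= N)%N.
Proof.
have okb N : eta_okb f Y N <-> eta_ok f Y N.
  by rewrite /eta_okb; case: excluded_middle_informative.
move=> [N0 H0]; rewrite /eta_index; case: excluded_middle_informative => [H|H].
  case: (ex_minnP H) => e /okb He emin; split => // N /okb; exact: emin.
by exfalso; apply: H; exists N0; apply/okb.
Qed.

Theorem lemma3p3 (G : zmodType) (D : G -> Prop) (L : {additive G -> G}) (k : nat)
  (Q : zmodType) (pi : {additive G -> Q}) (Lbar : Q -> Q) (X : G -> Prop) :
  free_abelian G ->
  is_subgroup D ->
  (forall d, D d -> D (L d)) ->
  (0 < k)%N ->
  inj_on L (iter_img L k D) ->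
  (forall q : Q, exists g, pi g = q) ->
  (forall g, pi g = 0 <-> D g) ->
  (forall g, Lbar (pi g) = pi (L g)) ->
  fingen_subgroup X ->
  (eta_index L X <= eta_index Lbar (img pi X) + k)%N.
Proof.
move=> _ SD DL _ injk pisurj piker HLb fgX.
have LB : forall x y, L (x - y) = L x - L y by move=> x y; rewrite raddfB.
have LbB : forall x y, Lbar (x - y) = Lbar x - Lbar y.
  move=> x y; have [a <-] := pisurj x; have [b <-] := pisurj y.
  by rewrite -raddfB !HLb -raddfB LB.
have SX := fg_sub fgX.
have fgXb : fingen_subgroup (img pi X).
  have [n [g HX]] := fg_span fgX; exists n, (fun j => pi (g j)) => q; split.
    move=> [x [/HX [c ->] ->]]; exists c; rewrite raddf_sum; apply: eq_bigr => j _.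
    by rewrite raddfMz.
  move=> [c ->]; exists (\sum_(j < n) g j *~ c j); split; first by apply/HX; exists c.
  by rewrite raddf_sum; apply: eq_bigr => j _; rewrite raddfMz.
have [okb _] := eta_index_spec (fitting LbB fgXb).
set e := eta_index Lbar (img pi X) in okb *.
have [_ Hmin] := eta_index_spec (fitting LB fgX).
apply: Hmin => m le _ _ [y1 [X1 ->]] [y2 [X2 ->]] Heq.
set z := y1 - y2.
have Xz : X z by exact: subB.
have z1 : iter m.+1 L z = 0 by rewrite (itB LB) !iterS Heq subrr.
have piit j : pi (iter j L z) = iter j Lbar (pi z).
  by elim: j => // j IH; rewrite !iterS -IH HLb.
have claim j : (e <= j)%N -> iter j.+1 Lbar (pi z) = 0 -> iter j Lbar (pi z) = 0.
  move=> lej H; rewrite -(it0 LbB j); apply: (okb j lej).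
  - by exists (pi z); split => //; exists z.
  - by exists 0; split; [exists 0; split; [exact: sub0 | rewrite raddf0] | ].
  by rewrite -iterS H -iterS it0.
have down d : iter (d + e) Lbar (pi z) = 0 -> iter e Lbar (pi z) = 0.
  elim: d => // d IH H; apply: IH; apply: claim; first exact: leq_addl.
  by rewrite -addSn.
have De : D (iter e L z).
  apply/piker; rewrite piit; apply: (down (m.+1 - e)%N); rewrite subnK -?piit ?z1 ?raddf0 //.
  by apply: leq_trans (leqW le); apply: leq_addr.
have [i mE] : exists i, m = (k + (i + e))%N.
  exists (m - (e + k))%N; by rewrite addnCA [(k + e)%N]addnC subnK.
have Di : D (iter i L (iter e L z)).
  by elim: i {mE} => // i IH; rewrite iterS; apply: DL.
have H0 : iter m L z = 0.
  rewrite mE iterD iterD -(it0 LB k); apply: injk.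
  - by exists (iter i L (iter e L z)).
  - by exists 0; split; first exact: sub0.
  by rewrite it0 // raddf0 -z1 mE -addSn !iterD.
by apply/eqP; rewrite -subr_eq0 -(itB LB) H0.
Qed.
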